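(* Let $(X,\mathcal{B},\mu)$ be a standard probability space and $K$ a subset of $\mathfrak{P}$. Then $$h^*_\mu(K)=\sup_{\mathcal{A}\in\mathcal{S}_K}h_\mu(\mathcal{A}),$$ where $\mathcal{S}_K$ is the collection of all sequences $(\alpha_i)_{i=1}^\infty$ of elements of $K$; moreover there is some $\mathcal{A}\in\mathcal{S}_K$ with $h^*_\mu(K)=h_\mu(\mathcal{A})$.
   Context: $\mathfrak{P}$ is the set of finite measurable partitions of $X$ (identified mod $0$); $\alpha\vee\beta=\{A\cap B\colon A\in\alpha,B\in\beta\}$; $H_\mu(\alpha)=-\sum_{A\in\alpha}\mu(A)\log\mu(A)$. For a sequence $\mathcal{A}=(\alpha_i)$ in $\mathfrak{P}$, $h_\mu(\mathcal{A})=\limsup_{n\to\infty}\frac1nH_\mu(\bigvee_{i=1}^n\alpha_i)$. For $K\subset\mathfrak{P}$, $P^*_{K,\mu}(n)=\sup_{\alpha_1,\dots,\alpha_n\in K}H_\mu(\bigvee_{i=1}^n\alpha_i)$ and $h^*_\mu(K)=\limsup_{n\to\infty}\frac1nP^*_{K,\mu}(n)$. *)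

(* Defs.v *)
From HB Require Import structures.
From mathcomp Require Import all_boot all_order all_algebra.
From mathcomp Require Import all_classical all_reals all_analysis.
Set Implicit Arguments. Unset Strict Implicit. Unset Printing Implicit Defensive.
Import Order.TTheory GRing.Theory Num.Theory.
Local Open Scope classical_set_scope.
Local Open Scope ring_scope.

Section Entropy.
Context {d : measure_display} {X : measurableType d} {R : realType}.

(* Standard probability space: the sigma-algebra of X is the Borel
   sigma-algebra of a complete separable metric on X (standard Borel space),
   carrying the probability measure mu. *)
Definition standard_prob_space (mu : probability X R) : Prop :=
  exists dm : X -> X -> R,
    (forall x y, 0 <= dm x y) /\
        (forall x y, dm x y = 0 <-> x = y) /\
        (forall x y, dm x y = dm y x) /\
        (forall x y z, dm x z <= dm x y + dm y z) /\
        (forall u : nat -> X,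
           (forall e : R, 0 < e -> exists N, forall m n, (N <= m)%N -> (N <= n)%N ->
              dm (u m) (u n) < e) ->
           exists l, forall e : R, 0 < e -> exists N, forall n, (N <= n)%N -> dm (u n) l < e) /\
        (exists s : nat -> X, forall x (e : R), 0 < e -> exists n, dm x (s n) < e) /\
        (forall A : set X, measurable A <->
           smallest (sigma_algebra setT)
             (fun B : set X => exists x (r : R), B = [set y | dm x y < r]) A).

Definition is_partition (P : seq (set X)) : Prop :=
  [/\ (forall A, A \in P -> measurable A),
      (forall i j, (i < size P)%N -> (j < size P)%N -> i <> j ->
          nth set0 P i `&` nth set0 P j = set0) &
      (forall x, exists2 A, A \in P & A x)].

Definition pjoin (a b : seq (set X)) : seq (set X) :=
  [seq A `&` B | A <- a, B <- b].

Definition pjoinn (alpha : nat -> seq (set X)) (n : nat) : seq (set X) :=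
  foldr pjoin [:: setT] [seq alpha i | i <- iota 0 n].

(* H_mu(alpha) = - sum_{A in alpha} mu(A) log mu(A)  (0 log 0 = 0 since ln 0 = 0) *)
Definition Hmu (mu : probability X R) (P : seq (set X)) : R :=
  - \sum_(A <- P) fine (mu A) * ln (fine (mu A)).

Definition hmu (mu : probability X R) (alpha : nat -> seq (set X)) : \bar R :=
  limn_esup (fun n => (Hmu mu (pjoinn alpha n) / n%:R)%:E).

Definition Pstar (mu : probability X R) (K : set (seq (set X))) (n : nat) : \bar R :=
  ereal_sup [set (Hmu mu (pjoinn alpha n))%:E |
             alpha in [set alpha : nat -> seq (set X) | forall i, (i < n)%N -> K (alpha i)]].

Definition hstar (mu : probability X R) (K : set (seq (set X))) : \bar R :=
  limn_esup (fun n => (Pstar mu K n * (n%:R)^-1%:E)%E).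

Definition seqs_in (K : set (seq (set X))) : set (nat -> seq (set X)) :=
  [set alpha | forall i, K (alpha i)].

End Entropy.

(* Main.v *)
Require Import Defs.
From HB Require Import structures.
From mathcomp Require Import all_boot all_order all_algebra.
From mathcomp Require Import all_classical all_reals all_analysis.
From mathcomp Require Import lra zify.
Set Implicit Arguments. Unset Strict Implicit. Unset Printing Implicit Defensive.
Import Order.TTheory GRing.Theory Num.Theory.
Local Open Scope classical_set_scope.
Local Open Scope ring_scope.

Section Ent.
Context {d : measure_display} {X : measurableType d} {R : realType}.
Variable mu : probability X R.

Lemma phi_aux (a b : R) : 0 <= a -> a <= b -> a * ln a <= a * ln b.
Proof.
move=> a0 ab; have [->|a_gt0] := eqVneq a 0; first by rewrite !mul0r.
have ap : 0 < a by rewrite lt_def a_gt0 a0.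
have bp : 0 < b by apply: lt_le_trans ab.
by rewrite ler_wpM2l // ler_ln // posrE.
Qed.

Lemma phi_sup (a b : R) : 0 <= a -> 0 <= b ->
  a * ln a + b * ln b <= (a + b) * ln (a + b).
Proof.
move=> a0 b0; rewrite mulrDl; apply: lerD; apply: phi_aux => //.
  by rewrite lerDl.
by rewrite lerDr.
Qed.

Lemma sum_phi_le (T : Type) (s : seq T) (g : T -> R) :
  (forall i, 0 <= g i) ->
  \sum_(i <- s) g i * ln (g i) <= (\sum_(i <- s) g i) * ln (\sum_(i <- s) g i).
Proof.
move=> g0; elim: s => [|x s IH]; first by rewrite !big_nil mul0r.
rewrite !big_cons; apply: le_trans (phi_sup (g0 x) _); first by rewrite lerD2l.
by apply: sumr_ge0.
Qed.

Lemma mu_split (a : seq (set X)) (B : set X) : is_partition a -> measurable B ->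
  mu B = (\sum_(A <- a) mu (A `&` B))%E.
Proof.
case=> ma dis cov mB.
have UE : B = \big[setU/set0]_(i < size a) (nth set0 a i `&` B).
  rewrite -(bigcup_mkord _ (fun i => nth set0 a i `&` B)); apply/seteqP; split => [x Bx|x [i _ [_ Bx]]] //.
  have [A Aa Ax] := cov x.
  exists (index A a); first by rewrite /= index_mem.
  by rewrite nth_index.
rewrite (big_nth set0) big_mkord {1}UE.
rewrite (@measure_semi_additive_ord_I _ _ _ mu (fun i => nth set0 a i `&` B)) //.
- by move=> k ka; apply: measurableI => //; apply: ma; rewrite mem_nth.
- apply/trivIsetP => i j /= ia ja ij.
  have E : nth set0 a i `&` nth set0 a j = set0.
    by apply: dis => // E; move/eqP: ij; apply.
  apply/seteqP; split => [x [[Ax _] [Bx _]]|x []//].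
  by move: E => /seteqP[/(_ x) + _]; apply; split.
- by rewrite -UE.
Qed.

Lemma fine_split (a : seq (set X)) (B : set X) : is_partition a -> measurable B ->
  fine (mu B) = \sum_(A <- a) fine (mu (A `&` B)).
Proof.
move=> pa mB; rewrite (mu_split pa mB).
have [ma _ _] := pa.
rewrite big_seq (eq_bigr (fun A => (fine (mu (A `&` B)))%:E)); last first.
  by move=> A Aa; rewrite fineK // fin_num_measure //; apply: measurableI => //; apply: ma.
by rewrite sumEFin /= big_seq.
Qed.

Lemma H_pjoin_ge (a b : seq (set X)) : is_partition a ->
  (forall B, B \in b -> measurable B) -> Hmu mu b <= Hmu mu (pjoin a b).
Proof.
move=> pa mb; have [ma _ _] := pa.
rewrite /Hmu /pjoin lerN2 big_allpairs_dep /= exchange_big /=.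
rewrite [leRHS]big_seq [leLHS]big_seq; apply: ler_sum => B Bb.
rewrite (fine_split pa (mb _ Bb)); apply: sum_phi_le => A.
by apply: fine_ge0; apply: measure_ge0.
Qed.

Lemma map_iotaS (T : Type) (f : nat -> T) m n :
  map f (iota m.+1 n) = map (fun i => f i.+1) (iota m n).
Proof. by elim: n m => //= n IH m; rewrite IH. Qed.

Lemma pjoinnS (alpha : nat -> seq (set X)) n :
  pjoinn alpha n.+1 = pjoin (alpha 0%N) (pjoinn (fun i => alpha i.+1) n).
Proof. by rewrite /pjoinn /= map_iotaS. Qed.

Lemma eq_pjoinn (a b : nat -> seq (set X)) n :
  (forall i, (i < n)%N -> a i = b i) -> pjoinn a n = pjoinn b n.
Proof.
move=> ab; rewrite /pjoinn; congr foldr; apply/eq_in_map => i.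
by rewrite mem_iota add0n => /andP[_ /ab].
Qed.

Lemma pjoinn_meas (alpha : nat -> seq (set X)) n :
  (forall i A, A \in alpha i -> measurable A) ->
  forall C, C \in pjoinn alpha n -> measurable C.
Proof.
elim: n alpha => [|n IH] alpha ma C.
  by rewrite /pjoinn /= inE => /eqP ->.
rewrite pjoinnS => /allpairsP [[A B] /= [Aa Bb ->]].
apply: measurableI; first exact: (ma 0%N).
by apply: (IH (fun i => alpha i.+1)) => // i; apply: ma.
Qed.

Lemma H_shift (alpha : nat -> seq (set X)) :
  (forall i, is_partition (alpha i)) -> forall N n,
  Hmu mu (pjoinn (fun j => alpha (N + j)%N) n) <= Hmu mu (pjoinn alpha (N + n)).
Proof.
move=> pa N n; elim: N alpha pa => [|N IH] alpha pa; first by [].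
rewrite addSn pjoinnS.
apply: (le_trans (IH (fun i => alpha i.+1) _)); first by move=> i; apply: pa.
apply: H_pjoin_ge; first exact: pa.
apply: pjoinn_meas => i A; have [ma _ _] := pa i.+1; exact: ma.
Qed.
End Ent.

Section Lims.
Context {R : realType}.
Local Open Scope ereal_scope.
Implicit Types u v : (\bar R)^nat.

Lemma limn_esupE u : limn_esup u = ereal_inf (range (esups u)).
Proof. by rewrite limn_esup_lim; apply/cvg_lim => //; exact: cvg_esups_inf. Qed.

Lemma limn_esup_gt u t : t < limn_esup u -> forall M, exists2 n, (M <= n)%N & t < u n.
Proof.
rewrite limn_esupE => H M.
have : t < esups u M by apply: (lt_le_trans H); apply: ereal_inf_lbound; exists M.
by move=> /ereal_sup_gt [_ [n /= Mn <-] tu]; exists n.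
Qed.

Lemma limn_esup_ge u t : (forall M, exists2 n, (M <= n)%N & t <= u n) -> t <= limn_esup u.
Proof.
move=> H; rewrite limn_esupE; apply/ereal_infP => _ [M _ <-].
have [n Mn tu] := H M; apply: (le_trans tu); apply: ereal_sup_ubound; by exists n.
Qed.

Lemma limn_esup_le u v : (forall n, u n <= v n) -> limn_esup u <= limn_esup v.
Proof.
move=> uv; rewrite !limn_esupE; apply/ereal_infP => _ [M _ <-].
apply: (@le_trans _ _ (esups u M)); first by apply: ereal_inf_lbound; exists M.
apply/ereal_supP => _ [n /= Mn <-]; apply: (le_trans (uv n)).
by apply: ereal_sup_ubound; exists n.
Qed.

Lemma le_via_reals (x y : \bar R) :
  (forall r : R, r%:E < x -> r%:E <= y) -> x <= y.
Proof.
case: x => [x'| |] H; case: y H => [y'| |] H //; rewrite ?leey ?leNye //.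
- rewrite lee_fin leNgt; apply/negP => yx.
  have := H ((x' + y') / 2)%R; rewrite !lte_fin lee_fin => /(_ ltac:(lra)); lra.
- by have := H (x' - 1)%R; rewrite lte_fin => /(_ ltac:(lra)).
- by have := H (y' + 1)%R; rewrite ltry => /(_ isT); rewrite lee_fin => ?; exfalso; lra.
- by have := H 0%R; rewrite ltry => /(_ isT).
Qed.
End Lims.

Section Concat.
Variable A : Type.
Variable ch : nat -> nat -> nat * (nat -> A).
Hypothesis ch_pos : forall k N, (0 < (ch k N).1)%N.

Fixpoint Nk k := match k with 0 => 0%N | k.+1 => (Nk k + (ch k (Nk k)).1)%N end.

Lemma Nk_ge k : (k <= Nk k)%N.
Proof. elim: k => //= k IH; have := ch_pos k (Nk k); lia. Qed.

Lemma Nk_mono k k' : (k <= k')%N -> (Nk k <= Nk k')%N.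
Proof.
move=> kk'; rewrite -(subnKC kk'); elim: (k' - k)%N => [|m IH]; first by rewrite addn0.
by rewrite addnS /=; apply: (leq_trans IH); apply: leq_addr.
Qed.

Lemma kof_ex i : exists k, (i < Nk k.+1)%N.
Proof. by exists i; have := Nk_ge i.+1. Qed.

Definition kof i := ex_minn (kof_ex i).

Definition concat i := (ch (kof i) (Nk (kof i))).2 (i - Nk (kof i))%N.

Lemma concat_block k j : (j < (ch k (Nk k)).1)%N ->
  concat (Nk k + j)%N = (ch k (Nk k)).2 j.
Proof.
move=> jn; rewrite /concat.
suff -> : kof (Nk k + j) = k by rewrite addKn.
rewrite /kof; case: ex_minnP => m Hm Hmin.
have mk : (m <= k)%N by apply: Hmin => /=; rewrite ltn_add2l.
apply/eqP; rewrite eqn_leq mk /=; rewrite leqNgt; apply/negP => mk'.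
have := Nk_mono mk'; move: Hm => /=; lia.
Qed.

Lemma concat_in (P : A -> Prop) : (forall k N i, P ((ch k N).2 i)) -> forall i, P (concat i).
Proof. by move=> H i; apply: H. Qed.
End Concat.

Section Main.
Context {d : measure_display} {X : measurableType d} {R : realType}.
Variable mu : probability X R.
Variable K : set (seq (set X)).

Lemma term_le alpha : seqs_in K alpha -> forall n,
  ((Hmu mu (pjoinn alpha n) / n%:R)%:E <= Pstar mu K n * (n%:R)^-1%:E)%E.
Proof.
move=> aK [|n]; first by rewrite invr0 mulr0 mule0.
rewrite EFinM lee_wpmul2r // ?lee_fin ?invr_ge0 //.
by apply: ereal_sup_ubound; exists alpha => // i _; exact: aK.
Qed.

Lemma hmu_le alpha : seqs_in K alpha -> (hmu mu alpha <= hstar mu K)%E.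
Proof. by move=> aK; apply: limn_esup_le; apply: term_le. Qed.

Lemma step P0 (s t : R) : K P0 -> s < t -> ((t%:E) < hstar mu K)%E -> forall N : nat,
  exists p : nat * (nat -> seq (set X)), [/\ (0 < p.1)%N, (forall i, K (p.2 i)) &
    s * (N + p.1)%:R <= Hmu mu (pjoinn p.2 p.1)].
Proof.
move=> KP0 st th N.
set M := (Num.truncn (`|s * N%:R| / (t - s))).+1.
have hM : `|s * N%:R| / (t - s) < M%:R := truncnS_gt _.
have [n Mn tn] := limn_esup_gt th M.
have n0 : (0 < n)%N by apply: leq_trans Mn.
have n0R : 0 < n%:R :> R by rewrite ltr0n.
rewrite lte_pdivlMr // in tn.
have [_ [beta' hb' <-] hy] := ereal_sup_gt tn.
exists (n, fun i => if (i < n)%N then beta' i else P0); split => //=.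
  by move=> i; case: ifP => // /hb'.
rewrite (@eq_pjoinn _ _ _ beta'); last by move=> i ->.
move: hy; rewrite -EFinM lte_fin => hy.
have ts : 0 < t - s by rewrite subr_gt0.
rewrite ltr_pdivrMr // in hM.
have h1 : s * N%:R <= `|s * N%:R| := ler_norm _.
have h2 : M%:R * (t - s) <= n%:R * (t - s) by rewrite ler_pM2r // ler_nat.
rewrite natrD; nra.
Qed.


Lemma construct P0 (s t : nat -> R) : K P0 -> (forall P, K P -> is_partition P) ->
  (forall k, s k < t k) -> (forall k, ((t k)%:E < hstar mu K)%E) ->
  (forall r, (r%:E < hstar mu K)%E -> exists k0, forall k, (k0 <= k)%N -> r <= s k) ->
  exists2 alpha, seqs_in K alpha & (hstar mu K <= hmu mu alpha)%E.
Proof.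
move=> KP0 Kp st th sr.
have stp k N := step KP0 (st k) (th k) N.
pose ch k N := proj1_sig (cid (stp k N)).
have chP k N : [/\ (0 < (ch k N).1)%N, (forall i, K ((ch k N).2 i)) &
    s k * (N + (ch k N).1)%:R <= Hmu mu (pjoinn (ch k N).2 (ch k N).1)].
  exact: (proj2_sig (cid (stp k N))).
have chpos k N : (0 < (ch k N).1)%N by case: (chP k N).
pose alpha := concat chpos.
have aK : seqs_in K alpha by move=> i; apply: concat_in => k N j; case: (chP k N).
exists alpha => //.
apply: le_via_reals => r rh.
have [k0 hk0] := sr r rh.
rewrite /hmu; apply: limn_esup_ge => M.
set k := maxn k0 M.
exists (Nk ch k.+1).
  apply: leq_trans (Nk_ge chpos _); rewrite /k; lia.
have [np _ hs] := chP k (Nk ch k).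
have pos : 0 < (Nk ch k.+1)%:R :> R by rewrite ltr0n; apply: leq_trans (Nk_ge chpos _).
rewrite lee_fin; apply: (le_trans (hk0 k _)); first by rewrite /k; lia.
rewrite ler_pdivlMr //; apply: (le_trans hs).
rewrite (_ : pjoinn (ch k (Nk ch k)).2 (ch k (Nk ch k)).1 =
   pjoinn (fun j => alpha (Nk ch k + j)%N) (ch k (Nk ch k)).1); last first.
  by apply: eq_pjoinn => j jn; rewrite /alpha concat_block.
apply: H_shift => i; apply: Kp; exact: aK.
Qed.

End Main.

Theorem lemma2p3 (d : measure_display) (X : measurableType d) (R : realType)
  (mu : probability X R) (K : set (seq (set X))) :
  standard_prob_space mu ->
  K !=set0 ->
  (forall P, K P -> is_partition P) ->
  hstar mu K = ereal_sup [set hmu mu alpha | alpha in seqs_in K] /\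
  exists2 alpha, seqs_in K alpha & hstar mu K = hmu mu alpha.
Proof.
move=> _ [P0 KP0] Kp.
suff [alpha aK ha] : exists2 alpha, seqs_in K alpha & (hstar mu K <= hmu mu alpha)%E.
  have E : hstar mu K = hmu mu alpha.
    by apply/eqP; rewrite eq_le ha hmu_le.
  split; last by exists alpha.
  apply/eqP; rewrite eq_le; apply/andP; split.
    by rewrite E; apply: ereal_sup_ubound; exists alpha.
  by apply/ereal_supP => _ [b bK <-]; exact: hmu_le.
case Eh: (hstar mu K) => [h| |].
- rewrite -Eh; apply: (@construct _ _ _ mu K P0 (fun k => h - (k.+1%:R)^-1) (fun k => h - (k.+2%:R)^-1)) => //.
  + move=> k; rewrite ltrD2l ltrN2 ltf_pV2 ?posrE ?ltr0n // ltr_nat //.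
  + by move=> k; rewrite Eh lte_fin ltrBlDr ltrDl invr_gt0 ltr0n.
  + move=> r; rewrite Eh lte_fin => rh.
    exists (Num.truncn ((h - r)^-1)) => k kk.
    have hr : 0 < h - r by rewrite subr_gt0.
    have h0 := truncnS_gt ((h - r)^-1).
    have h2 : (Num.truncn ((h - r)^-1)).+1%:R <= k.+1%:R :> R by rewrite ler_nat.
    move: h0 h2; set T : R := _.+1%:R => h0 h2.
    have h1 : 1 < T * (h - r) by rewrite -ltr_pdivrMr // div1r.
    have kp : 0 < k.+1%:R :> R by rewrite ltr0n.
    rewrite lerBrDr -lerBrDl -div1r ler_pdivrMr //; nra.
- rewrite -Eh; apply: (@construct _ _ _ mu K P0 (fun k => k%:R) (fun k => k.+1%:R)) => //.
  + by move=> k; rewrite ltr_nat.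
  + by move=> k; rewrite Eh ltry.
  + move=> r _; exists (Num.truncn r).+1 => k kk.
    by apply: (le_trans (ltW (truncnS_gt r))); rewrite ler_nat.
- by exists (fun _ => P0) => //; rewrite leNye.
Qed.
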